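(* Let $n\ge2$, let $a_1,\dots,a_n$ be positive integers, let $1\le k\le n$ with $a_k>1$, and let $s=[2a_1,-2a_2,\dots,(-1)^{k-1}2a_k,\dots,(-1)^{n-1}2a_n]$ and $r=[2a_1,-2a_2,\dots,(-1)^{k-1}2(a_k-1),\dots,(-1)^{n-1}2a_n]$ (the same sequence with $a_k$ replaced by $a_k-1$). Then $\Delta_{K(s)}$ and $\Delta_{K(r)}$ have only real zeros and $\delta(K(s))<\delta(K(r))$, where $\delta(K)$ denotes the largest zero of $\Delta_K(t)$.
   Context: For a finite sequence $r=[2a_1,2a_2,\dots,2a_n]$ of nonzero even integers, $K(r)$ denotes the 2-bridge knot or link whose associated rational number has the even continued fraction expansion $1/(2a_1-1/(2a_2-\cdots-1/(2a_n)))$. Let $M(r)$ be the $n\times n$ integer matrix whose $(k,k)$-entry is $a_k$, whose $(k,k+1)$-entry is $1$ ($1\le k\le n-1$), and whose other entries are $0$; $\Delta_{K(r)}(t)=\det(tM(r)-M(r)^T)$ is the (reduced) Alexander polynomial of $K(r)$ (up to sign). *)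

(* Defs.v *)
From HB Require Import structures.
From mathcomp Require Import all_boot all_order all_algebra all_field.
Set Implicit Arguments. Unset Strict Implicit. Unset Printing Implicit Defensive.
Import Order.TTheory GRing.Theory Num.Theory.
Local Open Scope ring_scope.

(* The matrix M(r) for r = [2 b_1, ..., 2 b_n], indexed from 0:
   b : nat -> int gives b_{i+1} = b i.  Entry (i,i) = b i, entry (i,i+1) = 1. *)
Definition Mmat (n : nat) (b : nat -> int) : 'M[int]_n :=
  \matrix_(i < n, j < n)
    (if i == j then b i else if (j == i.+1 :> nat) then 1 else 0).

Definition alex (n : nat) (b : nat -> int) : {poly int} :=
  \det (\matrix_(i < n, j < n) ('X * ((Mmat n b) i j)%:P - ((Mmat n b) j i)%:P)).

Definition zero_of (p : {poly int}) (z : algC) : Prop :=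
  root (map_poly (intr : int -> algC) p) z.

Definition only_real_zeros (p : {poly int}) : Prop :=
  forall z : algC, zero_of p z -> z \is Num.real.

Definition largest_zero (p : {poly int}) (d : algC) : Prop :=
  zero_of p d /\ forall z : algC, zero_of p z -> z <= d.

(* Alternating sequence [2a_1, -2a_2, ..., (-1)^{n-1} 2a_n], halved and 0-indexed. *)
Definition alt_seq (a : nat -> nat) (i : nat) : int := (-1) ^+ i * (a i)%:Z.

Definition dec_at (a : nat -> nat) (k : nat) (i : nat) : nat :=
  if i == k then (a i).-1 else a i.

(* Main.v *)
Require Import Defs.
From HB Require Import structures.
From mathcomp Require Import all_boot all_order all_algebra all_field.
From mathcomp Require Import ring lra zify polyrcf.
From Stdlib Require Import Classical.
Import Order.TTheory GRing.Theory Num.Theory.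
Local Open Scope ring_scope.
Set Implicit Arguments. Unset Strict Implicit. Unset Printing Implicit Defensive.
Section Tri.
Variable R : comPzRingType.
Variable f : nat -> nat -> R.
Hypothesis f0 : forall i j, (i > j.+1)%N \/ (j > i.+1)%N -> f i j = 0.

Definition Tm n : 'M[R]_n := \matrix_(i < n, j < n) f i j.

Lemma sign_dbl (m : nat) : (-1) ^+ (m + m) = 1 :> R.
Proof. by rewrite -signr_odd oddD addbb. Qed.

Lemma ltn_ordF n (i : 'I_n.+1) : (n < i)%N = false.
Proof. by rewrite ltnNge -ltnS ltn_ord. Qed.

Lemma Tm_rec n : \det (Tm n.+2) =
  f n.+1 n.+1 * \det (Tm n.+1) - f n.+1 n * f n n.+1 * \det (Tm n).
Proof.
rewrite (expand_det_row _ ord_max) big_ord_recr big_ord_recr /=.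
rewrite big1 ?add0r; last first.
  move=> j _; rewrite mxE f0 ?mul0r //; left => /=.
  by rewrite ltnS (leq_trans (ltn_ord j)).
have E1 : row' ord_max (col' ord_max (Tm n.+2)) = Tm n.+1.
  by apply/matrixP => i j; rewrite !mxE /= /bump !ltn_ordF.
rewrite /cofactor E1 !mxE /= sign_dbl mul1r addrC; congr (_ + _).
set B := row' _ _.
rewrite (expand_det_col _ ord_max) big_ord_recr /= big1 ?add0r; last first.
  move=> i _; rewrite !mxE /= /bump leqnn ltnNge (ltnW (ltn_ord i)) /= f0 ?mul0r //.
  by right; rewrite add1n add0n ltnS ltn_ord.
have E2 : row' ord_max (col' ord_max B) = Tm n.
  apply/matrixP => i j; rewrite !mxE /= /bump.
  have hi : (n <= i)%N = false by rewrite leqNgt ltn_ord.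
  have hj : (n <= j)%N = false by rewrite leqNgt ltn_ord.
  by rewrite hi hj /= !add0n ltnNge (ltnW (ltn_ord i)) hj.
rewrite /cofactor E2 !mxE /= /bump ltnn leqnn /= add0n sign_dbl mul1r.
rewrite -signr_odd addSn /= oddD addbb /= expr1.
ring.
Qed.
End Tri.

Definition gm (b : nat -> int) (i j : nat) : int :=
  if i == j then b i else if j == i.+1 then 1 else 0.
Definition gA (b : nat -> int) (i j : nat) : {poly int} :=
  'X * (gm b i j)%:P - (gm b j i)%:P.

Lemma gA0 b i j : (i > j.+1)%N \/ (j > i.+1)%N -> gA b i j = 0.
Proof.
move=> h; rewrite /gA /gm.
have h1 : (i == j) = false by apply/eqP; lia.
have h2 : (j == i) = false by apply/eqP; lia.
have h3 : (j == i.+1) = false by apply/eqP; lia.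
have h4 : (i == j.+1) = false by apply/eqP; lia.
by rewrite h1 h2 h3 h4 mulr0 subr0.
Qed.

Lemma alexE n b : alex n b = \det (Tm (gA b) n).
Proof.
rewrite /alex; congr (\det _); apply/matrixP => i j; rewrite !mxE /gA /gm.
by [].
Qed.

Fixpoint Pr (R : nzRingType) (a : nat -> nat) (m : nat) : {poly R} :=
  match m with
  | 0 => 1
  | 1 => (a 0%N)%:R * ('X - 1)
  | (m1.+1 as m2).+1 => (a m2)%:R * ('X - 1) * Pr R a m2 - 'X * Pr R a m1
  end.

Arguments Pr : clear implicits.
Fixpoint sg (m : nat) : int := if m is m'.+1 then (-1) ^+ m' * sg m' else 1.

Lemma sgSS m : sg m.+2 = - sg m.
Proof. rewrite /= mulrA -exprD addSn -signr_odd /= oddD addbb /= expr1. by rewrite mulN1r. Qed.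

Lemma PrSS (R : nzRingType) a m : Pr R a m.+2 = (a m.+1)%:R * ('X - 1) * Pr R a m.+1 - 'X * Pr R a m.
Proof. by []. Qed.
Lemma sgS m : sg m.+1 = (-1) ^+ m * sg m. Proof. by []. Qed.

Lemma alex_Pr a m : alex m (alt_seq a) = (sg m)%:P * Pr int a m.
Proof.
suff : alex m (alt_seq a) = (sg m)%:P * Pr int a m /\
       alex m.+1 (alt_seq a) = (sg m.+1)%:P * Pr int a m.+1 by case.
elim: m => [|m [IH1 IH2]].
  rewrite !alexE /= mul1r; split; first by rewrite det_mx00.
  rewrite det_mx11 !mxE /gA /gm /alt_seq /= expr0 !mul1r -natz polyC_natr.
  by rewrite mulrBr mulr1 mulrC.
split => //.
rewrite alexE Tm_rec; last exact: gA0.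
rewrite -!alexE IH1 IH2 sgSS PrSS.
move: (Pr int a m.+1) (Pr int a m) => P1 P0; clear IH1 IH2.
rewrite /gA /gm !eqxx /alt_seq.
have e1 : (m.+1 == m) = false by apply/eqP; lia.
have e2 : (m == m.+1) = false by apply/eqP; lia.
have e3 : (m == m.+2) = false by apply/eqP; lia.
rewrite e1 e2 e3 (sgS m) -polyC_natr natz exprS.
rewrite -signr_odd; case: (odd m); rewrite ?expr0 ?expr1;
rewrite !(polyCM, polyCN, polyC1, polyC0); ring.
Qed.

Fixpoint Fr (R : nzRingType) (a : nat -> nat) (m : nat) : {poly R} :=
  match m with
  | 0 => 1
  | 1 => (a 0%N)%:R * 'X
  | (m1.+1 as m2).+1 => (a m2)%:R * 'X * Fr R a m2 - Fr R a m1
  end.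
Arguments Fr : clear implicits.

Lemma FrSS (R : nzRingType) a m : Fr R a m.+2 = (a m.+1)%:R * 'X * Fr R a m.+1 - Fr R a m.
Proof. by []. Qed.

Lemma two_ind (P : nat -> Prop) : P 0%N -> P 1%N -> (forall m, P m -> P m.+1 -> P m.+2) -> forall m, P m.
Proof.
move=> h0 h1 hS m; suff : P m /\ P m.+1 by case.
by elim: m => [|m [h h']]; split => //; apply: hS.
Qed.

Lemma map_Pr (R S : nzRingType) (f : {rmorphism R -> S}) a m :
  map_poly f (Pr R a m) = Pr S a m.
Proof.
elim/two_ind: m => [||m IH1 IH2]; first by rewrite rmorph1.
  by rewrite /= rmorphM rmorph_nat rmorphB /= map_polyX rmorph1.
by rewrite PrSS PrSS rmorphB !rmorphM rmorph_nat rmorphB /= map_polyX rmorph1 IH1 IH2.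
Qed.

Lemma map_Fr (R S : nzRingType) (f : {rmorphism R -> S}) a m :
  map_poly f (Fr R a m) = Fr S a m.
Proof.
elim/two_ind: m => [||m IH1 IH2]; first by rewrite rmorph1.
  by rewrite /= rmorphM rmorph_nat /= map_polyX.
by rewrite FrSS FrSS rmorphB !rmorphM rmorph_nat /= map_polyX IH1 IH2.
Qed.

Lemma Pr_Fr (K : fieldType) a m (u : K) : u != 0 ->
  (Pr K a m).[u ^+ 2] = u ^+ m * (Fr K a m).[u - u^-1].
Proof.
move=> u0; elim/two_ind: m => [||m IH1 IH2]; first by rewrite !hornerE.
  rewrite /= -!polyC_natr !hornerE /=; field; done.
rewrite PrSS FrSS -!polyC_natr !hornerE IH1 IH2 /= !exprS; field; done.
Qed.

Lemma Fr_W (R : comNzRingType) a m :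
  (Fr R a m.+1)^`() * Fr R a m - Fr R a m.+1 * (Fr R a m)^`() =
  \sum_(k < m.+1) (a k)%:R * (Fr R a k) ^+ 2.
Proof.
elim: m => [|m IH].
  by rewrite big_ord_recr big_ord0 /= add0r !derivE; ring.
rewrite FrSS big_ord_recr -IH -!polyC_natr !derivE /=; ring.
Qed.

Lemma Fh0 (K : comNzRingType) a (y : K) : (Fr K a 0).[y] = 1. Proof. by rewrite hornerE. Qed.
Lemma Fh1 (K : comNzRingType) a (y : K) : (Fr K a 1).[y] = (a 0%N)%:R * y.
Proof. rewrite /= -polyC_natr !hornerE /=; reflexivity. Qed.
Lemma FhSS (K : comNzRingType) a m (y : K) : (Fr K a m.+2).[y] =
  (a m.+1)%:R * y * (Fr K a m.+1).[y] - (Fr K a m).[y].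
Proof. by rewrite FrSS -polyC_natr !hornerE. Qed.


Section Real.
Variable R : rcfType.

Lemma ivt (p : {poly R}) a b : a <= b -> p.[a] <= 0 <= p.[b] ->
  exists2 x, a <= x <= b & root p x.
Proof. exact: Num.Theory.poly_ivt. Qed.

Lemma cont_ge0 (p : {poly R}) z : (forall y, z < y -> 0 < p.[y]) -> 0 <= p.[z].
Proof.
move=> hp; rewrite leNgt; apply/negP => hz.
have h1 : 0 < p.[z + 1] by apply: hp; rewrite ltrDl.
have [x /andP[zx x1] rx] : exists2 x, z <= x <= z + 1 & root p x.
  by apply: ivt; [rewrite lerDl | rewrite (ltW hz) (ltW h1)].
have : z < x.
  rewrite lt_neqAle zx andbT; apply/eqP => e; subst x.
  by move: rx; rewrite /root => /eqP e; rewrite e ltxx in hz.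
by move/hp; move: rx; rewrite /root => /eqP ->; rewrite ltxx.
Qed.

Lemma deriv_ge0 (p : {poly R}) z : root p z -> (forall y, z < y -> 0 < p.[y]) ->
  0 <= (p^`()).[z].
Proof.
move=> /factor_theorem [q ->] hp.
rewrite derivM !derivE !hornerE subrr mulr0 add0r.
apply: cont_ge0 => y zy; have := hp y zy.
by rewrite hornerM hornerXsubC pmulr_lgt0 // subr_gt0.
Qed.

Lemma last_ge (s : seq R) y : path <%R y s -> y <= last y s.
Proof.
elim: s y => [|x s IH] y //= /andP[yx ps].
by apply: le_trans (ltW yx) (IH _ ps).
Qed.

Lemma mem_last_ge (s : seq R) x0 x : sorted <%R s -> x \in s -> x <= last x0 s.
Proof.
case: s => [|y s] //= ps.
elim: s y ps => [|z s IH] y /=.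
  by move=> _; rewrite inE => /eqP ->.
move=> /andP[yz ps]; rewrite inE => /orP[/eqP ->|xs].
  exact: le_trans (ltW yz) (last_ge ps).
by apply: IH.
Qed.

Definition lr (p : {poly R}) := last 0 (rootsR p).

Lemma lr_ge (p : {poly R}) x : p != 0 -> root p x -> x <= lr p.
Proof.
move=> p0 rx; apply: mem_last_ge; first exact: sorted_roots.
by rewrite -(roots_on_rootsR p0) rx andbT.
Qed.

Lemma lr_root (p : {poly R}) x : p != 0 -> root p x -> root p (lr p).
Proof.
move=> p0 rx; have := roots_on_rootsR p0 (lr p).
rewrite /lr; case E: (rootsR p) => [|y s].
  by move: (roots_on_rootsR p0 x); rewrite E rx andbT in_nil.
move=> h; suff : last 0 (y :: s) \in y :: s by rewrite -h => /andP[].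
by rewrite /= mem_last.
Qed.

Lemma lr_beyond (p : {poly R}) : (forall y, 2 <= y -> 0 < p.[y]) ->
  forall y, lr p < y -> 0 < p.[y].
Proof.
move=> h2 y ly.
have p0 : p != 0 by apply/eqP => e; have := h2 2 (lexx _); rewrite e horner0 ltxx.
have [y2|y2] := leP 2 y; first exact: h2.
rewrite ltNge; apply/negP => hy.
have [x /andP[yx _] rx] : exists2 x, y <= x <= 2 & root p x.
  by apply: ivt; [exact: ltW | rewrite hy ltW // h2].
by have := lr_ge p0 rx; rewrite leNgt (lt_le_trans ly yx).
Qed.


Lemma F_big a m y : (forall k, (k < m)%N -> (0 < a k)%N) -> 2 <= y ->
  forall j, (j <= m)%N -> 1 <= (Fr R a j).[y].
Proof.
move=> ha y2.
have an k : (k < m)%N -> 1 <= (a k)%:R :> R by move=> /ha; rewrite ler1n.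
suff H : forall j, (j < m)%N -> 1 <= (Fr R a j).[y] <= (Fr R a j.+1).[y].
  case=> [|j] jm; first by rewrite Fh0.
  by have /andP[h1 h2] := H j jm; apply: le_trans h2.
elim=> [|j IH] jm.
  rewrite Fh0 Fh1 lexx /=.
  have y1 : 1 <= y by apply: le_trans y2; rewrite ler1n.
  by have := ler_pM ler01 ler01 (an _ jm) y1; rewrite mulr1.
have /andP[h0 h1] := IH (ltnW jm).
rewrite FhSS (le_trans h0 h1) /=.
have hay : 2 <= (a j.+1)%:R * y.
  by have := ler_pM ler01 (ler0n _ _) (an _ jm) y2; rewrite mul1r.
have : 2 * (Fr R a j.+1).[y] <= (a j.+1)%:R * y * (Fr R a j.+1).[y].
  by apply: ler_wpM2r => //; apply: le_trans h1; apply: le_trans h0.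
lra.
Qed.

Lemma core a m z : (forall k, (k <= m)%N -> (0 < a k)%N) ->
  root (Fr R a m.+1) z -> (forall y, z < y -> 0 < (Fr R a m.+1).[y]) ->
  0 < (Fr R a m).[z].
Proof.
move=> ha rz hp.
have hd := deriv_ge0 rz hp.
have W : ((Fr R a m.+1)^`() * Fr R a m - Fr R a m.+1 * (Fr R a m)^`()).[z] =
  (\sum_(k < m.+1) (a k)%:R * (Fr R a k) ^+ 2).[z] by rewrite Fr_W.
move: W; rewrite hornerD hornerN !hornerM (rootP rz) mul0r subr0 horner_sum.
have hS : 0 < \sum_(k < m.+1) ((a k)%:R * Fr R a k ^+ 2).[z].
  rewrite big_ord_recl.
  have t0 : ((a (@ord0 m))%:R * Fr R a (@ord0 m) ^+ 2).[z] = (a 0%N)%:R :> R.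
    by rewrite [X in X ^+ 2]/= expr1n mulr1 -polyC_natr hornerC.
  rewrite t0.
  have h1 : 0 < (a 0%N)%:R :> R by rewrite ltr0n ha.
  have h2 : 0 <= \sum_(i < m) ((a (bump 0 i))%:R * Fr R a (bump 0 i) ^+ 2).[z].
    apply: sumr_ge0 => i _; rewrite -polyC_natr hornerM hornerC hornerE.
    by rewrite mulr_ge0 ?ler0n ?sqr_ge0.
  move: h2; set S := \sum_(i < m) _; move=> h2.
  lra.
move=> W; rewrite -W in hS.
rewrite ltNge; apply/negP => hf.
by have := mulr_ge0_le0 hd hf; rewrite leNgt hS.
Qed.

Section Pos.
Variables (a : nat -> nat) (n : nat).
Hypothesis ha : forall k, (k < n)%N -> (0 < a k)%N.

Lemma F_pos2 j y : (j <= n)%N -> 2 <= y -> 0 < (Fr R a j).[y].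
Proof. by move=> jn y2; apply: lt_le_trans (F_big ha y2 jn). Qed.

Lemma Fbeyond j : (j <= n)%N -> forall y, lr (Fr R a j) < y -> 0 < (Fr R a j).[y].
Proof. by move=> jn; apply: lr_beyond => y y2; apply: F_pos2. Qed.

Lemma F_neq0 j : (j <= n)%N -> Fr R a j != 0.
Proof.
move=> jn; apply/eqP => e; have := F_pos2 jn (lexx 2).
by rewrite e horner0 ltxx.
Qed.

Lemma chain c m : (m < n)%N -> (forall y, c < y -> 0 < (Fr R a m.+1).[y]) ->
  forall y, c < y -> 0 < (Fr R a m).[y].
Proof.
move=> mn hc y cy; rewrite ltNge; apply/negP => hy.
case: m mn hc hy => [|m] mn hc hy; first by move: hy; rewrite Fh0 ler10.
have y2 : y < 2.
  by rewrite ltNge; apply/negP => y2; have := F_pos2 (ltnW mn) y2; rewrite ltNge hy.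
have [x /andP[yx _] rx] : exists2 x, y <= x <= 2 & root (Fr R a m.+1) x.
  by apply: ivt; [exact: ltW | rewrite hy ltW // F_pos2 // ltnW].
have p0 := F_neq0 (ltnW mn).
have rz := lr_root p0 rx.
have xz := lr_ge p0 rx.
have hcore : 0 < (Fr R a m).[lr (Fr R a m.+1)].
  apply: (core _ rz (Fbeyond (ltnW mn))).
  by move=> k km; apply: ha; apply: leq_ltn_trans km (ltnW mn).
have hz := hc (lr (Fr R a m.+1)) (lt_le_trans cy (le_trans yx xz)).
rewrite FhSS (rootP rz) mulr0 sub0r oppr_gt0 in hz.
by rewrite ltNge (ltW hz) in hcore.
Qed.

Lemma chain_all c m : (m <= n)%N -> (forall y, c < y -> 0 < (Fr R a m).[y]) ->
  forall j, (j <= m)%N -> forall y, c < y -> 0 < (Fr R a j).[y].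
Proof.
elim: m => [|m IH] mn hc j jm.
  by move: jm; rewrite leqn0 => /eqP ->.
case: (ltngtP j m.+1) jm => // [jm _|-> _]; last exact: hc.
by apply: IH (ltnW mn) (chain mn hc) j jm.
Qed.

Lemma F_has_root : (0 < n)%N -> exists x, root (Fr R a n) x.
Proof.
move=> n0; case: (classic (exists x, root (Fr R a n) x)) => // nr.
have hp : forall y, (-1) < y -> 0 < (Fr R a n).[y].
  move=> y _; rewrite ltNge; apply/negP => hy.
  have y2 : y <= 2.
    rewrite leNgt; apply/negP => y2.
    have := F_pos2 (leqnn n) (ltW y2). by rewrite ltNge hy.
  have [x _ rx] : exists2 x, y <= x <= 2 & root (Fr R a n) x.
    apply: ivt => //; rewrite hy /=; apply: ltW; apply: F_pos2 (leqnn n) (lexx 2).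
  by apply: nr; exists x.
have := chain_all (leqnn n) hp n0 (ltrN10 R).
by rewrite Fh1 mulr0 ltxx.
Qed.

Definition xl := lr (Fr R a n).

Lemma xl_root : (0 < n)%N -> root (Fr R a n) xl.
Proof. by move=> n0; have [x rx] := F_has_root n0; apply: lr_root rx; apply: F_neq0. Qed.

Lemma xl_prefix : (0 < n)%N -> forall j, (j < n)%N -> 0 < (Fr R a j).[xl].
Proof.
move=> n0 j jn.
have hall := chain_all (leqnn n) (Fbeyond (leqnn n)).
have ge0 i : (i <= n)%N -> 0 <= (Fr R a i).[xl].
  by move=> i_n; apply: cont_ge0 => y; apply: hall.
rewrite lt_neqAle (ge0 _ (ltnW jn)) andbT eq_sym.
case: j jn => [|j] jn; first by rewrite Fh0 oner_eq0.
apply/eqP => e.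
have rj : root (Fr R a j.+1) xl by apply/rootP.
have hk : forall k, (k <= j)%N -> (0 < a k)%N.
  by move=> k kj; apply: ha; apply: leq_ltn_trans kj (ltnW jn).
have hb : forall y, xl < y -> 0 < (Fr R a j.+1).[y].
  by move=> y hy; apply: hall (ltnW jn) y hy.
have hc := core hk rj hb.
have := ge0 j.+2 jn.
rewrite FhSS e mulr0 sub0r oppr_ge0.
by rewrite leNgt hc.
Qed.

Lemma xl_gt0 : (1 < n)%N -> 0 < xl.
Proof.
move=> n1; have := xl_prefix (ltnW n1) n1; rewrite Fh1.
by rewrite pmulr_rgt0 // ltr0n ha // ltnW.
Qed.
End Pos.

Lemma cmp (a b : nat -> nat) n k : (1 < n)%N ->
  (forall i, (i < n)%N -> (0 < b i)%N) -> (k < n)%N -> (b k < a k)%N ->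
  (forall i, i != k -> a i = b i) ->
  xl a n < xl b n.
Proof.
move=> n1 hb kn bka hab.
have ba i : (b i <= a i)%N.
  by case: (eqVneq i k) => [->|/hab ->]; [exact: ltnW|].
have ha i : (i < n)%N -> (0 < a i)%N by move=> /hb h; apply: leq_trans h (ba i).
have n0 : (0 < n)%N by apply: ltnW.
rewrite ltNge; apply/negP => hle.
set z := xl a n.
have zpos : 0 < z by apply: lt_le_trans (xl_gt0 hb n1) hle.
have hallb := chain_all hb (leqnn n) (Fbeyond hb (leqnn n)).
have Bpos j : (j < n)%N -> 0 < (Fr R b j).[z].
  move=> jn; case: (eqVneq (xl b n) z) => [<-|ne]; first exact: xl_prefix.
  by apply: hallb (ltnW jn) _ _; rewrite lt_neqAle ne hle.
have Bn : 0 <= (Fr R b n).[z].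
  by apply: cont_ge0 => y zy; apply: (Fbeyond hb (leqnn n)); apply: le_lt_trans zy.
have za : (Fr R a n).[z] = 0 by apply/rootP; apply: xl_root.
pose A j := (Fr R a j).[z]; pose B j := (Fr R b j).[z].
have claim : forall j, (j < n)%N -> 0 < A j.+1 /\ B j.+1 * A j <= A j.+1 * B j /\
    ((k <= j)%N -> B j.+1 * A j < A j.+1 * B j).
  elim=> [|j IH] jn.
    rewrite /A /B !Fh0 !Fh1 !mulr1.
    have a0 : 0 < (a 0%N)%:R :> R by rewrite ltr0n ha.
    split; first by rewrite mulr_gt0.
    split; first by apply: ler_wpM2r; [exact: ltW | rewrite ler_nat].
    by rewrite leqn0 => /eqP k0; rewrite ltr_pM2r // ltr_nat; move: bka; rewrite k0.
  have [IH1 [IH2 IH3]] := IH (ltnW jn).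
  have B1 : 0 < B j.+1 by rewrite /B; apply: Bpos.
  have B2 : 0 <= B j.+2.
    move: (jn); rewrite leq_eqVlt => /orP[/eqP ->|jn2]; first exact: Bn.
    exact: ltW (Bpos _ jn2).
  have eA : A j.+2 = (a j.+1)%:R * z * A j.+1 - A j by rewrite /A FhSS.
  have eB : B j.+2 = (b j.+1)%:R * z * B j.+1 - B j by rewrite /B FhSS.
  have hab1 : (b j.+1)%:R <= (a j.+1)%:R :> R by rewrite ler_nat.
  have P0 : 0 < z * A j.+1 * B j.+1 by rewrite !mulr_gt0.
  have key : ((b j.+1)%:R - (a j.+1)%:R) * (z * A j.+1 * B j.+1) <= 0.
    by rewrite mulr_le0_ge0 // ?subr_le0 // ltW.
  have strict : (k <= j.+1)%N -> B j.+2 * A j.+1 < A j.+2 * B j.+1.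
    rewrite leq_eqVlt => /orP[/eqP kj|kj].
      have key' : ((b j.+1)%:R - (a j.+1)%:R) * (z * A j.+1 * B j.+1) < 0.
        by rewrite pmulr_llt0 // subr_lt0 ltr_nat -kj.
      rewrite eA eB; move: IH2 key'; set x1 := A j.+1; set x0 := A j;
      set y1 := B j.+1; set y0 := B j; move=> IH2 key'; nra.
    have := IH3 kj; rewrite eA eB; move: key; set x1 := A j.+1; set x0 := A j;
      set y1 := B j.+1; set y0 := B j; move=> key IH3'; nra.
  have weak : B j.+2 * A j.+1 <= A j.+2 * B j.+1.
    rewrite eA eB; move: IH2 key; set x1 := A j.+1; set x0 := A j;
    set y1 := B j.+1; set y0 := B j; move=> IH2 key; nra.
  split; last by split.
  have : 0 < A j.+2 * B j.+1.
    move: (jn); rewrite leq_eqVlt => /orP[/eqP e2|jn2]; last first.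
      apply: lt_le_trans weak; rewrite mulr_gt0 //; exact: Bpos.
    apply: le_lt_trans (strict _); first by rewrite mulr_ge0 // ltW.
    by rewrite -ltnS e2.
  by rewrite pmulr_lgt0.
have nn : (n.-1 < n)%N by rewrite prednK // ltnSn.
have [h _] := claim n.-1 nn.
by move: h; rewrite prednK // /A za ltxx.
Qed.
End Real.

Lemma realDconj (w : algC) : w + w^* \is Num.real.
Proof. by rewrite CrealE rmorphD /= conjCK addrC. Qed.

Lemma Fr_real_root a n (x : algC) : (0 < n)%N ->
  (forall k, (k < n)%N -> (0 < a k)%N) ->
  (Fr algC a n).[x] = 0 -> x \is Num.real.
Proof.
move=> n0 ha hx.
pose f k := (Fr algC a k).[x].
pose S m := \sum_(k < m) (a k)%:R * (f k * (f k)^*).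
have claim : forall m, x * S m.+1 - f m.+1 * (f m)^* \is Num.real.
  elim=> [|m IH].
    rewrite /S big_ord_recr big_ord0 /= add0r /f Fh0 Fh1 rmorph1 !mulr1.
    by rewrite mulrC subrr rpred0.
  have e : x * S m.+2 - f m.+2 * (f m.+1)^* =
      (x * S m.+1 - f m.+1 * (f m)^*) + (f m.+1 * (f m)^* + (f m.+1 * (f m)^*)^*).
    rewrite /S big_ord_recr /= /f FhSS rmorphM /= conjCK.
    set s := \sum_(i < m.+1) _; set F1 := (Fr algC a m.+1).[x]; set F0 := (Fr algC a m).[x].
    ring.
  by rewrite e rpredD // realDconj.
have hS : 0 < S n.
  rewrite /S; case: n n0 ha hx {claim} => // n _ ha hx.
  rewrite big_ord_recl /= /f Fh0 rmorph1 mulr1.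
  have h1 : 0 < (a 0%N)%:R :> algC by rewrite ltr0n ha.
  rewrite mulr1; apply: lt_le_trans h1 _; rewrite lerDl.
  apply: sumr_ge0 => i _; rewrite -normCK mulr_ge0 ?ler0n //.
  by rewrite exprn_ge0.
have := claim n.-1; rewrite prednK // -/(f n) /f hx mul0r subr0.
move=> hr.
have -> : x = (x * S n) / S n by rewrite mulfK // gt_eqF.
by rewrite rpredM // rpredV gtr0_real.
Qed.

Lemma quad_real (v : algC) : v != 0 -> v - v^-1 \is Num.real -> v \is Num.real.
Proof.
move=> v0 xr.
have ev : v = ((v + v^-1) + (v - v^-1)) / 2 by field.
have wc : (v + v^-1) ^+ 2 = (v - v^-1) ^+ 2 + 4 by field.
move: ev wc xr; move: (v + v^-1) (v - v^-1) => w x ev wc xr.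
have c0 : 0 <= x ^+ 2 + 4.
  by rewrite addr_ge0 // real_exprn_even_ge0.
have wr : w \is Num.real.
  have : w ^+ 2 == (sqrtC (x ^+ 2 + 4)) ^+ 2 by rewrite sqrtCK wc.
  rewrite eqf_sqr => /orP[] /eqP ->; first exact: sqrtC_real.
  by rewrite rpredN sqrtC_real.
rewrite ev rpredM ?rpredD ?rpredV //; apply: ger0_real; exact: ler0n.
Qed.

Lemma Pr0 (R : comNzRingType) a m : (Pr R a m.+1).[0] = - (a m)%:R * (Pr R a m).[0].
Proof.
case: m => [|m]; first by rewrite /= -polyC_natr !hornerE /=; ring.
by rewrite PrSS -!polyC_natr !hornerE; ring.
Qed.

Lemma Pr0_neq0 a m : (forall k, (k < m)%N -> (0 < a k)%N) -> (Pr algC a m).[0] != 0.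
Proof.
elim: m => [|m IH] ha; first by rewrite hornerE oner_eq0.
rewrite Pr0 mulf_neq0 // ?oppr_eq0 ?pnatr_eq0 -?lt0n ?ha //.
by apply: IH => k km; apply: ha; apply: ltnW.
Qed.

Lemma algR_le (x y : algR) : (algRval x <= algRval y) = (x <= y).
Proof. by []. Qed.

Definition U (x : algR) : algR := (x + Num.sqrt (x ^+ 2 + 4)) / 2.

Lemma U_facts x : 0 < U x /\ U x - (U x)^-1 = x.
Proof.
set s := Num.sqrt (x ^+ 2 + 4).
have s0 : 0 <= s by apply: sqrtr_ge0.
have s2 : s ^+ 2 = x ^+ 2 + 4 by rewrite sqr_sqrtr // addr_ge0 // sqr_ge0.
have hp : 0 < x + s by nra.
have Up : 0 < U x by rewrite /U divr_gt0.
split => //.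
have U0 : U x != 0 by rewrite gt_eqF.
have q : U x ^+ 2 - 1 = x * U x.
  have e : ((x + s) / 2) ^+ 2 - 1 - x * ((x + s) / 2) = (s ^+ 2 - (x ^+ 2 + 4)) / 4.
    by field.
  rewrite s2 subrr mul0r in e; apply/eqP; rewrite -subr_eq0; exact/eqP.
have -> : U x - (U x)^-1 = (U x ^+ 2 - 1) / U x by field.
by rewrite q mulfK.
Qed.

Lemma inv_mono_le (u w : algR) : 0 < u -> 0 < w -> u <= w -> u - u^-1 <= w - w^-1.
Proof.
move=> u0 w0 uw.
have : w^-1 <= u^-1 by rewrite lef_pV2 ?posrE.
lra.
Qed.

Lemma inv_mono_lt (u w : algR) : 0 < u -> 0 < w -> u < w -> u - u^-1 < w - w^-1.
Proof.
move=> u0 w0 uw.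
have : w^-1 < u^-1 by rewrite ltf_pV2 ?posrE.
lra.
Qed.

Lemma sg_neq0 n : sg n != 0.
Proof. by elim: n => [|n IH] //=; rewrite mulf_neq0 // signr_eq0. Qed.

Lemma zero_alex a n z : zero_of (alex n (alt_seq a)) z <-> root (Pr algC a n) z.
Proof.
rewrite /zero_of alex_Pr rmorphM /= map_polyC map_Pr rootM rootC /=.
by rewrite intr_eq0 (negbTE (sg_neq0 n)).
Qed.

Lemma roots_bound a n : (1 < n)%N -> (forall k, (k < n)%N -> (0 < a k)%N) ->
  root (Pr algC a n) (algRval (U (@xl algR a n) ^+ 2)) /\
  forall t, root (Pr algC a n) t -> t \is Num.real /\ t <= algRval (U (@xl algR a n) ^+ 2).
Proof.
move=> n1 ha.
have n0 : (0 < n)%N by apply: ltnW.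
set xa := @xl algR a n.
have [Up Ue] := U_facts xa.
have rxa : root (Fr algR a n) xa by apply: xl_root.
split.
  rewrite -(map_Pr algRval) fmorph_root; apply/rootP.
  rewrite Pr_Fr ?gt_eqF // Ue (rootP rxa) mulr0 //.
move=> t rt.
have t0 : t != 0.
  by apply: contraTneq rt => ->; rewrite /root Pr0_neq0.
set v := sqrtC t.
have v0 : v != 0 by rewrite sqrtC_eq0.
have tv : t = v ^+ 2 by rewrite sqrtCK.
have hF : (Fr algC a n).[v - v^-1] = 0.
  have := rootP rt; rewrite tv Pr_Fr // => /eqP; rewrite mulf_eq0 expf_eq0 (negbTE v0) andbF /=.
  by move/eqP.
have xr : v - v^-1 \is Num.real by apply: Fr_real_root hF.
have vr : v \is Num.real by apply: quad_real.
have tr : t \is Num.real by rewrite tv rpredX.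
split => //.
have tge : 0 <= t by rewrite tv real_exprn_even_ge0.
have vpos : 0 < v by rewrite lt_neqAle eq_sym v0 sqrtC_ge0.
pose v' := in_algR vr.
have v'p : 0 < v' by [].
have xv : algRval (v' - v'^-1) = v - v^-1 by rewrite rmorphB fmorphV.
have rx' : root (Fr algR a n) (v' - v'^-1).
  by rewrite -(fmorph_root algRval) map_Fr; apply/rootP; rewrite rmorphB fmorphV /=.
have le1 : v' - v'^-1 <= xa by apply: lr_ge rx'; apply: F_neq0 (leqnn n).
have le2 : v' <= U xa.
  rewrite leNgt; apply/negP => hlt; have := @inv_mono_lt (U xa) v' Up v'p hlt.
  by rewrite Ue ltNge le1.
have le3 : v' ^+ 2 <= U xa ^+ 2 by rewrite ler_pXn2r // nnegrE ltW.
rewrite tv rmorphXn; move: le3; rewrite -algR_le !rmorphXn; exact.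
Qed.

Unset Implicit Arguments.

Theorem theorem9p7 (n : nat) (a : nat -> nat) (k : nat) :
  (2 <= n)%N ->
  (forall i, (i < n)%N -> (0 < a i)%N) ->
  (k < n)%N -> (1 < a k)%N ->
  only_real_zeros (alex n (alt_seq a)) /\
  only_real_zeros (alex n (alt_seq (dec_at a k))) /\
  exists ds dr : algC,
    largest_zero (alex n (alt_seq a)) ds /\
    largest_zero (alex n (alt_seq (dec_at a k))) dr /\
    ds < dr.
Proof.
move=> n2 ha kn ak.
set b := dec_at a k.
have hb : forall i, (i < n)%N -> (0 < b i)%N.
  move=> i iN; rewrite /b /dec_at; case: eqP => [->|_]; last exact: ha.
  lia.
have bka : (b k < a k)%N by rewrite /b /dec_at eqxx; lia.
have hab : forall i, i != k -> a i = b i by move=> i /negbTE ik; rewrite /b /dec_at ik.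
have [ra Ha] := @roots_bound a n n2 ha.
have [rb Hb] := @roots_bound b n n2 hb.
split.
  by move=> z /zero_alex /Ha [].
split.
  by move=> z /zero_alex /Hb [].
exists (algRval (U (@xl algR a n) ^+ 2)), (algRval (U (@xl algR b n) ^+ 2)).
split.
  split; first exact/zero_alex.
  by move=> z /zero_alex /Ha [].
split.
  split; first exact/zero_alex.
  by move=> z /zero_alex /Hb [].
have hlt := @cmp algR a b n k n2 hb kn bka hab.
have [Uap Uae] := U_facts (@xl algR a n).
have [Ubp Ube] := U_facts (@xl algR b n).
have lt1 : U (@xl algR a n) < U (@xl algR b n).
  rewrite ltNge; apply/negP => hle.
  have := @inv_mono_le _ _ Ubp Uap hle; rewrite Uae Ube.
  by rewrite leNgt hlt.
have lt2 : U (@xl algR a n) ^+ 2 < U (@xl algR b n) ^+ 2.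
  by rewrite ltr_pXn2r // nnegrE ltW.
exact: lt2.
Qed.
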